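(* Any parallel MTTKRP algorithm on $P$ processors, each with local memory of size $M$, in which the $IR$ $N$-ary multiplies are distributed among the processors, involves some processor performing at least \[ \frac{1}{3^{2-1/N}}\,\frac{N I R}{P\,M^{1-1/N}} - M \] sends and receives.
   Context: MTTKRP: Fix integers $N\ge 2$, $I_1,\dots,I_N\ge1$, $R\ge1$, and a mode $n\in[N]$; let $I=I_1I_2\cdots I_N$. Inputs are an $N$-way tensor $\mathcal{X}$ of dimensions $I_1\times\cdots\times I_N$ and matrices $A^{(k)}$ of size $I_k\times R$ for $k\in[N]\setminus\{n\}$; the output is the $I_n\times R$ matrix $B^{(n)}$ with $B^{(n)}(i_n,r)=\sum \mathcal{X}(i_1,\dots,i_N)\prod_{k\ne n}A^{(k)}(i_k,r)$, the sum over all $(i_1,\dots,i_N)$ with $n$-th entry $i_n$; values come from an arbitrary set with two binary operations (no algebraic laws assumed). Each point of the iteration space $[I_1]\times\cdots\times[I_N]\times[R]$ corresponds to one atomic $N$-ary multiply, which must be performed by some processor, and the products are accumulated by binary additions. Parallel model: $P$ processors, each with a local memory holding at most $M$ values, connected by a network; a processor operates only on values in its local memory; communication consists of sends and receives of individual values. *)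

(* Defs.v *)
From Stdlib Require Import Arith List Permutation Reals.
Import ListNotations.

(* dims = [I_1; ...; I_N] (0-based positions 0..N-1); the mode n is 0-based. *)

Fixpoint idx_tuples (ds : list nat) : list (list nat) :=
  match ds with
  | [] => [[]]
  | d :: ds' => flat_map (fun j => map (cons j) (idx_tuples ds')) (seq 0 d)
  end.

Definition valid_idx (dims : list nat) (i : list nat) : Prop :=
  length i = length dims /\ forall k, k < length dims -> nth k i 0 < nth k dims 0.

(* ---------- Values: free term algebra (no algebraic laws assumed) ---------- *)
Inductive term : Type :=
  | TX   (i : list nat)              (* tensor entry X(i_1,...,i_N) *)
  | TA   (k j r : nat)               (* factor entry A^(k)(j, r) *)
  | TMul (args : list term)          (* N-ary multiply *)
  | TAdd (a b : term).

Definition is_input (N : nat) (dims : list nat) (R n : nat) (t : term) : Prop :=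
  (exists i, t = TX i /\ valid_idx dims i) \/
  (exists k j r, t = TA k j r /\ k < N /\ k <> n /\ j < nth k dims 0 /\ r < R).

(* operands of the multiply at point (i, r): X(i), then A^(k)(i_k, r) for k <> n, increasing k *)
Definition mul_args (N n : nat) (i : list nat) (r : nat) : list term :=
  TX i :: map (fun k => TA k (nth k i 0) r) (filter (fun k => negb (k =? n)) (seq 0 N)).

Definition prod_term (N n : nat) (i : list nat) (r : nat) : term :=
  TMul (mul_args N n i r).

(* the products contributing to B(iN, r) *)
Definition products_for (N : nat) (dims : list nat) (n iN r : nat) : list term :=
  map (fun i => prod_term N n i r)
      (filter (fun i => nth n i 0 =? iN) (idx_tuples dims)).

Inductive sum_tree : term -> list term -> Prop :=
  | sum_leaf t : sum_tree t [t]
  | sum_node a b la lb : sum_tree a la -> sum_tree b lb -> sum_tree (TAdd a b) (la ++ lb).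

(* processors are 0..P-1; a state gives each processor's local memory (a list of values) *)
Definition state := nat -> list term.

Definition upd (s : state) (p : nat) (l : list term) : state :=
  fun q => if q =? p then l else s q.

Definition bounded (P M : nat) (s : state) : Prop :=
  forall p, p < P -> length (s p) <= M.

Inductive event : Type :=
  | ETransfer (src dst : nat) (t : term)   (* src sends one value t, dst receives it *)
  | EMul (p : nat) (args : list term)
  | EAdd (p : nat) (a b : term)
  | EDel (p : nat) (t : term).             (* p discards one copy of t *)

Inductive step (N P M : nat) : state -> event -> state -> Prop :=
  | st_transfer s src dst t :
      src < P -> dst < P -> src <> dst -> In t (s src) ->
      bounded P M (upd s dst (t :: s dst)) ->
      step N P M s (ETransfer src dst t) (upd s dst (t :: s dst))
  | st_mul s p args :
      p < P -> length args = N -> (forall a, In a args -> In a (s p)) ->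
      bounded P M (upd s p (TMul args :: s p)) ->
      step N P M s (EMul p args) (upd s p (TMul args :: s p))
  | st_add s p a b :
      p < P -> In a (s p) -> In b (s p) ->
      bounded P M (upd s p (TAdd a b :: s p)) ->
      step N P M s (EAdd p a b) (upd s p (TAdd a b :: s p))
  | st_del s p t l1 l2 :
      p < P -> s p = l1 ++ t :: l2 ->
      step N P M s (EDel p t) (upd s p (l1 ++ l2)).

Inductive run (N P M : nat) : state -> list event -> state -> Prop :=
  | run_nil s : run N P M s [] s
  | run_cons s e s' es s'' :
      step N P M s e s' -> run N P M s' es s'' -> run N P M s (e :: es) s''.

Definition comm (p : nat) (es : list event) : nat :=
  length (filter (fun e => match e with
                           | ETransfer a b _ => orb (a =? p) (b =? p)
                           | _ => false
                           end) es).

Definition mttkrp_execution (N : nat) (dims : list nat) (R n P M : nat)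
    (s0 : state) (es : list event) (sf : state) : Prop :=
  bounded P M s0 /\
  (forall p t, p < P -> In t (s0 p) -> is_input N dims R n t) /\
  (* the execution is legal (local operations only on local values, memory <= M throughout) *)
  run N P M s0 es sf /\
  (forall i r, In i (idx_tuples dims) -> r < R ->
     exists j q, nth_error es j = Some (EMul q (mul_args N n i r)) /\
       forall j' q', nth_error es j' = Some (EMul q' (mul_args N n i r)) -> j' = j) /\
  (* at the end, every output entry B(iN, r) is held by some processor, as a sum
     (by binary additions, in any order/bracketing) of exactly its products *)
  (forall iN r, iN < nth n dims 0 -> r < R ->
     exists p t ls, p < P /\ In t (sf p) /\ sum_tree t ls /\
       Permutation ls (products_for N dims n iN r)).

(* Main.v *)
Require Import Defs.
From Stdlib Require Import Arith List Reals Lra Lia Psatz ClassicalDescription Permutation FinFun.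
Require Import Defs.

Section RealPart1.
Local Open Scope R_scope.

Lemma tangent (A B : R) (m : nat) : 0 <= A -> 0 <= B ->
  A ^ m * (INR (S m) * B - INR m * A) <= B ^ (S m).
Proof.
  intros HA HB. induction m as [|m IH].
  - simpl. lra.
  - assert (Ha : 0 <= A ^ m) by (apply pow_le; lra).
    rewrite !S_INR in *. 
    replace (A ^ S m) with (A * A ^ m) by (simpl; ring).
    replace (B ^ S (S m)) with (B * B ^ S m) by (simpl; ring).
    assert (H1 : 0 <= B * (B ^ S m - A ^ m * ((INR m + 1) * B - INR m * A)))
      by (apply Rmult_le_pos; lra).
    assert (H2 : 0 <= (INR m + 1) * A ^ m * ((B - A) * (B - A))).
    { apply Rmult_le_pos; [apply Rmult_le_pos; [pose proof (pos_INR m); lra | lra] | pose proof (Rle_0_sqr (B - A)) as Hq; unfold Rsqr in Hq; lra]. }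
    nra.
Qed.

Lemma div_nonneg a b : 0 <= a -> 0 < b -> 0 <= a / b.
Proof. intros. unfold Rdiv. apply Rmult_le_pos; [lra| left; apply Rinv_0_lt_compat; lra]. Qed.

Definition prodR (l : list R) := fold_right Rmult 1 l.
Definition sumR (l : list R) := fold_right Rplus 0 l.

Lemma prodR_nonneg l : Forall (fun x => 0 <= x) l -> 0 <= prodR l.
Proof. induction 1; simpl; [lra|]. apply Rmult_le_pos; auto. Qed.
Lemma sumR_nonneg l : Forall (fun x => 0 <= x) l -> 0 <= sumR l.
Proof. induction 1; simpl; lra. Qed.

Lemma amgm (l : list R) : Forall (fun x => 0 <= x) l ->
  prodR l * INR (length l) ^ (length l) <= sumR l ^ (length l).
Proof.
  induction 1 as [|x l Hx Hl IH].
  - simpl; lra.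
  - change (prodR (x :: l)) with (x * prodR l).
    change (sumR (x :: l)) with (x + sumR l).
    change (length (x :: l)) with (Datatypes.S (length l)).
    set (m := length l) in *. set (p := prodR l) in *. set (S := sumR l) in *.
    assert (Hp : 0 <= p) by (apply prodR_nonneg; auto).
    assert (HS : 0 <= S) by (apply sumR_nonneg; auto).
    destruct (Nat.eq_dec m 0) as [Hm|Hm].
    + rewrite Hm in *. simpl. destruct l; [|discriminate]. unfold p, S; simpl. lra.
    + assert (Hmpos : 0 < INR m) by (apply lt_0_INR; lia).
      set (A := S / INR m). set (B := (x + S) / INR (Datatypes.S m)).
      assert (HA : 0 <= A) by (unfold A; apply div_nonneg; lra).
      assert (HB : 0 <= B) by (unfold B; apply div_nonneg; [lra| apply lt_0_INR; lia]).
      pose proof (tangent A B m HA HB) as T.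
      assert (E1 : INR (Datatypes.S m) * B - INR m * A = x).
      { unfold A, B. field. split; [lra| apply not_0_INR; lia]. }
      rewrite E1 in T.
      assert (E2 : S ^ m = A ^ m * INR m ^ m).
      { rewrite <- Rpow_mult_distr. unfold A. f_equal. field. lra. }
      assert (Hpm : p <= A ^ m).
      { assert (0 < INR m ^ m) by (apply pow_lt; lra). nra. }
      assert (E3 : (x + S) ^ Datatypes.S m = B ^ Datatypes.S m * INR (Datatypes.S m) ^ Datatypes.S m).
      { rewrite <- Rpow_mult_distr. unfold B. f_equal. field. apply not_0_INR; lia. }
      rewrite E3.
      assert (0 <= INR (Datatypes.S m) ^ Datatypes.S m) by (apply pow_le; apply pos_INR).
      assert (x * p <= B ^ Datatypes.S m).
      { apply Rle_trans with (x * A ^ m); [apply Rmult_le_compat_l; lra| lra]. }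
      nra.
Qed.

End RealPart1.

Section RealPart2.
Local Open Scope R_scope.

Lemma prodR_INR (c : list nat) : prodR (map INR c) = INR (fold_right Nat.mul 1%nat c).
Proof. induction c; simpl; [reflexivity|]. rewrite mult_INR, IHc. reflexivity. Qed.
Lemma sumR_INR (c : list nat) : sumR (map INR c) = INR (fold_right Nat.add 0%nat c).
Proof. induction c; simpl; [reflexivity|]. rewrite plus_INR, IHc. reflexivity. Qed.

Lemma Rpower_pos x y : 0 < Rpower x y.
Proof. unfold Rpower. apply exp_pos. Qed.

Lemma per_r (s x N : nat) (c : list nat) : (2 <= N)%nat -> length c = N ->
  (s <= x)%nat -> (s <= fold_right Nat.mul 1%nat c)%nat ->
  INR s <= Rpower (INR x) (1 - / INR N) * INR (fold_right Nat.add 0%nat c) / INR N.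
Proof.
  intros HN Hc Hsx Hsp.
  assert (HNpos : 0 < INR N) by (apply lt_0_INR; lia).
  set (pc := fold_right Nat.mul 1%nat c) in *.
  set (sc := fold_right Nat.add 0%nat c) in *.
  destruct (Nat.eq_dec s 0) as [Hs|Hs].
  - subst s. simpl. pose proof (Rpower_pos (INR x) (1 - / INR N)). pose proof (pos_INR sc).
    apply div_nonneg; [|lra]. apply Rmult_le_pos; lra.
  - assert (Hspos : 0 < INR s) by (apply lt_0_INR; lia).
    assert (Hxpos : 0 < INR x) by (apply lt_0_INR; lia).
    assert (Hpcpos : 1 <= INR pc) by (replace 1 with (INR 1) by reflexivity; apply le_INR; lia).
    assert (HNinv : 0 < / INR N) by (apply Rinv_0_lt_compat; lra).
    assert (HNinv1 : / INR N <= / 2).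
    { apply Rinv_le_contravar; [lra|]. replace 2 with (INR 2) by reflexivity. apply le_INR. lia. }
    assert (Hs1 : INR s = Rpower (INR s) (1 - / INR N) * Rpower (INR s) (/ INR N)).
    { rewrite <- Rpower_plus. replace (1 - / INR N + / INR N) with 1 by ring.
      rewrite Rpower_1; lra. }
    pose proof (amgm (map INR c)) as AM.
    rewrite prodR_INR, sumR_INR, length_map, Hc in AM.
    fold pc sc in AM.
    assert (Hf : Forall (fun x => 0 <= x) (map INR c)).
    { apply Forall_forall. intros y Hy. apply in_map_iff in Hy. destruct Hy as [z [<- _]]. apply pos_INR. }
    specialize (AM Hf).
    assert (HNN : 0 < INR N ^ N) by (apply pow_lt; lra).
    assert (Hscpos : 0 < INR sc).
    { destruct (Rle_lt_dec (INR sc) 0) as [H|H]; [|lra].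
      assert (INR sc = 0) by (pose proof (pos_INR sc); lra).
      rewrite H0 in AM. rewrite pow_i in AM by lia. nra. }
    assert (Hpc : INR pc <= (INR sc / INR N) ^ N).
    { unfold Rdiv. rewrite Rpow_mult_distr, pow_inv.
      apply Rmult_le_reg_r with (INR N ^ N); [lra|].
      rewrite Rmult_assoc, Rinv_l by lra. lra. }
    assert (Hr1 : Rpower (INR s) (1 - / INR N) <= Rpower (INR x) (1 - / INR N)).
    { apply Rle_Rpower_l; [lra|]. split; [lra|]. apply le_INR; auto. }
    assert (Hr2 : Rpower (INR s) (/ INR N) <= INR sc / INR N).
    { apply Rle_trans with (Rpower (INR pc) (/ INR N)).
      { apply Rle_Rpower_l; [lra|]. split; [lra|]. apply le_INR; auto. }
      apply Rle_trans with (Rpower ((INR sc / INR N) ^ N) (/ INR N)).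
      { apply Rle_Rpower_l; [lra|]. split; [lra|]. auto. }
      assert (Hq : 0 < INR sc / INR N) by (unfold Rdiv; apply Rmult_lt_0_compat; lra).
      rewrite <- Rpower_pow by auto. rewrite Rpower_mult, Rinv_r by lra.
      rewrite Rpower_1 by auto. lra. }
    rewrite Hs1.
    pose proof (Rpower_pos (INR s) (1 - / INR N)).
    pose proof (Rpower_pos (INR s) (/ INR N)).
    unfold Rdiv in *. rewrite Rmult_assoc.
    apply Rmult_le_compat; lra.
Qed.

End RealPart2.

Section RealPart3.
Local Open Scope R_scope.

Lemma final_arith (C W Tz P M N I Rr : R) :
  0 < P -> 0 < M -> 0 < N ->
  Tz = I * Rr -> Tz <= P * W ->
  W <= (C / M + 1) * (Rpower (3 * M) (1 - / N) * (3 * M) / N) ->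
  C >= / Rpower 3 (2 - / N) * (N * I * Rr) / (P * Rpower M (1 - / N)) - M.
Proof.
  intros HP HM HN ET HT HW.
  set (a := 1 - / N) in *.
  assert (E1 : Rpower (3 * M) a = Rpower 3 a * Rpower M a).
  { rewrite Rpower_mult_distr; lra. }
  assert (E2 : Rpower 3 (2 - / N) = 3 * Rpower 3 a).
  { replace (2 - / N) with (1 + a) by (unfold a; ring).
    rewrite Rpower_plus, Rpower_1; lra. }
  rewrite E1 in HW. rewrite E2.
  set (x := Rpower 3 a) in *. set (y := Rpower M a) in *.
  assert (Hx : 0 < x) by apply Rpower_pos.
  assert (Hy : 0 < y) by apply Rpower_pos.
  assert (H1 : Tz <= P * ((C + M) * (3 * x * y) / N)).
  { apply Rle_trans with (P * W); auto. apply Rmult_le_compat_l; [lra|].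
    replace ((C + M) * (3 * x * y) / N) with ((C / M + 1) * (x * y * (3 * M) / N)) by (field; lra).
    exact HW. }
  assert (Hpos : 0 < P * (3 * x * y)) by (apply Rmult_lt_0_compat; [lra| apply Rmult_lt_0_compat; [lra|auto]]).
  replace (/ (3 * x) * (N * I * Rr) / (P * y)) with (N * Tz / (P * (3 * x * y))).
  2: { rewrite ET. field. repeat split; lra. }
  apply Rle_ge.
  apply Rle_trans with ((C + M) - M); [|lra].
  apply Rplus_le_compat_r.
  unfold Rdiv. apply Rmult_le_reg_r with (P * (3 * x * y)); auto.
  rewrite Rmult_assoc, Rinv_l by lra.
  replace (C + M) with ((C + M) * (3 * x * y) / N * N / (3 * x * y)) by (field; lra).
  assert (H2 : N * Tz <= N * (P * ((C + M) * (3 * x * y) / N))) by (apply Rmult_le_compat_l; lra).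
  replace (N * (P * ((C + M) * (3 * x * y) / N))) with ((C + M) * (P * (3 * x * y))) in H2 by (field; lra).
  replace ((C + M) * (3 * x * y) / N * N / (3 * x * y) * (P * (3 * x * y))) with ((C + M) * (P * (3 * x * y))) by (field; lra).
  lra.
Qed.

End RealPart3.


Inductive sub : term -> term -> Prop :=
  | sbt_refl t : sub t t
  | sbt_addl t a b : sub t a -> sub t (TAdd a b)
  | sbt_addr t a b : sub t b -> sub t (TAdd a b)
  | sbt_mul t a args : In a args -> sub t a -> sub t (TMul args).

Lemma sbt_trans x y z : sub x y -> sub y z -> sub x z.
Proof.
  intros H1 H2. induction H2.
  - exact H1.
  - apply sbt_addl; auto.
  - apply sbt_addr; auto.
  - eapply sbt_mul; eauto.
Qed.

Section Run.
Context {N P M : nat}.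

Lemma run_app s A B s' : run N P M s (A ++ B) s' -> exists m, run N P M s A m /\ run N P M m B s'.
Proof.
  revert s. induction A as [|e A IH]; intros s H; simpl in H.
  - exists s. split; [constructor|auto].
  - inversion H; subst. destruct (IH _ H5) as [m [H1 H2]].
    exists m. split; auto. econstructor; eauto.
Qed.

Lemma run_join s A m B s' : run N P M s A m -> run N P M m B s' -> run N P M s (A ++ B) s'.
Proof.
  induction 1; simpl; auto. intros. econstructor; eauto.
Qed.

Definition ev_ok (e : event) : Prop :=
  match e with
  | ETransfer a b _ => a < P /\ b < P /\ a <> b
  | EMul p _ => p < P
  | EAdd p _ _ => p < P
  | EDel p _ => p < P
  end.

Lemma run_ev s L s' : run N P M s L s' -> forall e, In e L -> ev_ok e.
Proof.
  induction 1; simpl; [tauto|]. intros e' [<-|Hin]; auto.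
  inversion H; subst; simpl; auto.
Qed.

Lemma upd_eq s p l : upd s p l p = l.
Proof. unfold upd. rewrite Nat.eqb_refl. reflexivity. Qed.
Lemma upd_neq s p l q : q <> p -> upd s p l q = s q.
Proof. intros. unfold upd. destruct (Nat.eqb_spec q p); congruence. Qed.

Lemma run_bounded s L s' : run N P M s L s' -> bounded P M s -> bounded P M s'.
Proof.
  induction 1; auto. intros Hb. apply IHrun.
  inversion H; subst; auto.
  intros q Hq. destruct (Nat.eq_dec q p) as [->|ne].
  - rewrite upd_eq. specialize (Hb p Hq). rewrite H2 in Hb. rewrite length_app in *. simpl in Hb. lia.
  - rewrite upd_neq by auto. auto.
Qed.

Lemma trace (Q : term -> Prop) (args0 : list term) (q : nat)
  (HQa : forall a b, Q (TAdd a b) -> Q a \/ Q b)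
  (HQm : forall args, Q (TMul args) -> args = args0 \/ exists a, In a args /\ Q a) :
  forall s L s', run N P M s L s' -> (forall p', ~ In (EMul p' args0) L) ->
  forall q' u, q' < P -> q' <> q -> In u (s' q') -> Q u ->
  (exists q'' u'', q'' < P /\ q'' <> q /\ In u'' (s q'') /\ Q u'') \/
  (exists dst u'', In (ETransfer q dst u'') L /\ Q u'').
Proof.
  induction 1 as [s|s e s1 L s2 Hst Hrun IH]; intros Hno q' u Hq' Hne Hin HQ.
  - left. exists q', u. auto.
  - assert (Hno' : forall p', ~ In (EMul p' args0) L) by (intros p' H; apply (Hno p'); right; auto).
    destruct (IH Hno' q' u Hq' Hne Hin HQ) as [[q'' [u'' [H1 [H2 [H3 H4]]]]] | [dst [u'' [H1 H2]]]].
    2: { right. exists dst, u''. split; [right|]; auto. }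
    inversion Hst; subst.
    +
      destruct (Nat.eq_dec q'' dst) as [->|nd].
      * rewrite upd_eq in H3. destruct H3 as [->|H3].
        -- destruct (Nat.eq_dec src q) as [->|ns].
           ++ right. exists dst, u''. split; [left; reflexivity|auto].
           ++ left. exists src, u''. auto.
        -- left. exists dst, u''. auto.
      * rewrite upd_neq in H3 by auto. left. exists q'', u''. auto.
    +
      destruct (Nat.eq_dec q'' p) as [->|nd].
      * rewrite upd_eq in H3. destruct H3 as [<-|H3].
        -- destruct (HQm _ H4) as [->|[a [Ha HQa']]].
           ++ exfalso. apply (Hno p). left. reflexivity.
           ++ left. exists p, a. auto.
        -- left. exists p, u''. auto.
      * rewrite upd_neq in H3 by auto. left. exists q'', u''. auto.
    +
      destruct (Nat.eq_dec q'' p) as [->|nd].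
      * rewrite upd_eq in H3. destruct H3 as [<-|H3].
        -- destruct (HQa _ _ H4) as [Ha|Hb].
           ++ left. exists p, a. auto.
           ++ left. exists p, b. auto.
        -- left. exists p, u''. auto.
      * rewrite upd_neq in H3 by auto. left. exists q'', u''. auto.
    +
      destruct (Nat.eq_dec q'' p) as [->|nd].
      * rewrite upd_eq in H3. left. exists p, u''. repeat split; auto.
        rewrite H0. apply in_app_or in H3. apply in_or_app. simpl. tauto.
      * rewrite upd_neq in H3 by auto. left. exists q'', u''. auto.
Qed.

Definition inp_shape (u : term) : Prop :=
  match u with TX _ => True | TA _ _ _ => True | _ => False end.

Lemma inp_trace s L s' : run N P M s L s' -> forall q u, inp_shape u -> In u (s' q) ->
  In u (s q) \/ exists src, In (ETransfer src q u) L.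
Proof.
  induction 1 as [s|s e s1 L s2 Hst Hrun IH]; intros q u Hu Hin; auto.
  destruct (IH q u Hu Hin) as [H3|[src Hs]].
  2: { right. exists src. right. auto. }
  inversion Hst; subst.
  - destruct (Nat.eq_dec q dst) as [->|nd].
    + rewrite upd_eq in H3. destruct H3 as [<-|H3]; auto.
      right. exists src. left. reflexivity.
    + rewrite upd_neq in H3; auto.
  - destruct (Nat.eq_dec q p) as [->|nd].
    + rewrite upd_eq in H3. destruct H3 as [<-|H3]; [simpl in Hu; tauto|auto].
    + rewrite upd_neq in H3; auto.
  - destruct (Nat.eq_dec q p) as [->|nd].
    + rewrite upd_eq in H3. destruct H3 as [<-|H3]; [simpl in Hu; tauto|auto].
    + rewrite upd_neq in H3; auto.
  - destruct (Nat.eq_dec q p) as [->|nd].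
    + rewrite upd_eq in H3. left. rewrite H0. apply in_app_or in H3. apply in_or_app. simpl. tauto.
    + rewrite upd_neq in H3; auto.
Qed.

End Run.
Arguments run_app {N P M s A B s'} _.
Arguments run_join {N P M s A m B s'} _ _.
Arguments run_ev {N P M s L s'} _ {e} _.
Arguments run_bounded {N P M s L s'} _ _.
Arguments inp_trace {N P M s L s'} _ {q u} _ _.
Lemma run_cons_inv {N P M s e L s'} : run N P M s (e :: L) s' -> exists m, step N P M s e m /\ run N P M m L s'.
Proof. intros H. inversion H; subst. eauto. Qed.
Lemma step_mul_inv {N P M s p args s'} : step N P M s (EMul p args) s' ->
  p < P /\ (forall a, In a args -> In a (s p)) /\ s' = upd s p (TMul args :: s p) /\
  bounded P M s'.
Proof. intros H. inversion H; subst. auto. Qed.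
Arguments trace {N P M} Q args0 q _ _ {s L s'} _ _ {q' u} _ _ _ _.


From mathcomp Require ssreflect ssrfun ssrbool eqtype ssrnat seq.

Module Aux.
Import ssreflect ssrfun ssrbool eqtype ssrnat seq.
Set Implicit Arguments. Unset Strict Implicit. Unset Printing Implicit Defensive.


Section Comb.
Variables (N n : nat).
Implicit Types (S : seq (seq nat * nat)).

Definition Sr S (r : nat) : seq (seq nat) := [seq x.1 | x <- S & x.2 == r].
Definition Pk S r k : seq nat := undup [seq nth 0 i k | i <- Sr S r].
Definition Xk S : seq (seq nat) := [seq 0 :: x.1 | x <- S].
Definition Ak S : seq (seq nat) :=
  flatten [seq [seq [:: 1; k; nth 0 x.1 k; x.2] | k <- iota 0 N & k != n] | x <- S].
Definition Bk S : seq (seq nat) := [seq [:: 2; nth 0 x.1 n; x.2] | x <- S].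

Lemma size_Sr S r : size (Sr S r) = count (fun x => x.2 == r) S.
Proof. by rewrite /Sr size_map size_filter. Qed.

Lemma size_part S (Rs : seq nat) : uniq Rs -> {subset [seq x.2 | x <- S] <= Rs} ->
  size S = sumn [seq size (Sr S r) | r <- Rs].
Proof.
move=> uR; elim: S => [_|x S IH sub] /=.
  by rewrite /Sr /=; elim: Rs {uR} => //= r Rs <-.
have -> : [seq size (Sr (x :: S) r) | r <- Rs] =
   [seq (x.2 == r) + size (Sr S r) | r <- Rs].
  by apply: eq_map => r; rewrite !size_Sr /=.
rewrite IH; last by move=> y Hy; apply: sub; rewrite inE Hy orbT.
have : x.2 \in Rs by apply: sub; rewrite inE eqxx.
elim: Rs uR {sub IH} => //= r Rs IH /andP [rn uR].
rewrite inE => /orP [/eqP e|xin].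
  rewrite e eqxx /=.
  have -> : sumn [seq (r == r0) + size (Sr S r0) | r0 <- Rs] =
    sumn [seq size (Sr S r0) | r0 <- Rs].
    elim: Rs rn {uR IH} => //= r1 Rs IH; rewrite inE negb_or => /andP [ne rn].
    by rewrite (negbTE ne) IH.
  by rewrite add1n addSn.
have ne : x.2 != r by apply/eqP => e; rewrite -e xin in rn.
by rewrite (negbTE ne) add0n -IH // addnS.
Qed.

Fixpoint cprod (Ps : seq (seq nat)) : seq (seq nat) :=
  match Ps with
  | [::] => [:: [::]]
  | P :: Ps' => [seq j :: y | j <- P, y <- cprod Ps']
  end.

Definition prodn (s : seq nat) := foldr muln 1 s.

Lemma size_cprod Ps : size (cprod Ps) = prodn [seq size P | P <- Ps].
Proof. by elim: Ps => //= P Ps IH; rewrite size_allpairs IH. Qed.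

Lemma mem_cprod Ps i : size i = size Ps ->
  (forall k, k < size Ps -> nth 0 i k \in nth [::] Ps k) -> i \in cprod Ps.
Proof.
elim: Ps i => [|P Ps IH] [|j i] //= [si] H.
apply/allpairsP; exists (j, i) => //=; split; last by [].
- by have := H 0 isT.
- apply: IH => // k lk; exact: (H k.+1 lk).
Qed.

Lemma Sr_uniq S r : uniq S -> uniq (Sr S r).
Proof.
move=> uS; rewrite /Sr map_inj_in_uniq ?filter_uniq //.
move=> [i r1] [j r2]; rewrite !mem_filter /= => /andP [/eqP -> _] /andP [/eqP -> _] /= ->.
by [].
Qed.

Lemma Sr_size S r : (forall x, x \in S -> size x.1 = N) ->
  uniq S -> size (Sr S r) <= prodn [seq size (Pk S r k) | k <- iota 0 N].
Proof.
move=> sz uS.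
have -> : [seq size (Pk S r k) | k <- iota 0 N] =
   [seq size P | P <- [seq Pk S r k | k <- iota 0 N]] by rewrite -map_comp.
rewrite -size_cprod; apply: uniq_leq_size; first exact: Sr_uniq.
move=> i iS; apply: mem_cprod.
  rewrite size_map size_iota.
  by move: iS; rewrite /Sr => /mapP [x]; rewrite mem_filter => /andP [_ xS] ->; apply: sz.
move=> k; rewrite size_map size_iota => lk.
rewrite (nth_map 0) ?size_iota // nth_iota // add0n /Pk mem_undup.
by apply: map_f.
Qed.

Lemma Sr_sizeX S r : uniq S -> size (Sr S r) <= size (undup (Xk S)).
Proof.
move=> uS; rewrite -(size_map (cons 0)); apply: uniq_leq_size.
  by rewrite map_inj_uniq ?Sr_uniq // => a b [].
move=> y /mapP [i iS ->]; rewrite mem_undup /Xk.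
move: iS; rewrite /Sr => /mapP [x]; rewrite mem_filter => /andP [_ xS] ->.
by apply: (map_f (fun x => 0 :: x.1)).
Qed.

Definition key k j r : seq nat := if k == n then [:: 2; j; r] else [:: 1; k; j; r].

Lemma sum_keys S (Rs : seq nat) : uniq Rs -> n < N ->
  sumn [seq sumn [seq size (Pk S r k) | k <- iota 0 N] | r <- Rs]
  <= size (undup (Ak S ++ Bk S)).
Proof.
move=> uR nN.
pose t r := [seq (k, j) | k <- iota 0 N, j <- Pk S r k].
pose Z := [seq key kj.1 kj.2 r | r <- Rs, kj <- t r].
have szZ : size Z = sumn [seq sumn [seq size (Pk S r k) | k <- iota 0 N] | r <- Rs].
  rewrite /Z size_allpairs_dep; congr sumn; apply: eq_map => r.
  by rewrite /t size_allpairs_dep.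
rewrite -szZ; apply: uniq_leq_size.
  apply: allpairs_uniq_dep => //.
    move=> r _; apply: allpairs_uniq_dep => //; first exact: iota_uniq.
      by move=> k _; apply: undup_uniq.
    by move=> [k1 j1] [k2 j2] _ _ /= [-> ->].
  move=> [r1 [k1 j1]] [r2 [k2 j2]] _ _ /=.
  rewrite /key; case: ifP => e1; case: ifP => e2 //.
  + by move=> [-> ->]; move: e1 e2 => /eqP -> /eqP ->.
  + by move=> [-> -> ->].
move=> y /allpairsPdep [r [[k j] [rR]]]; rewrite /t => /allpairsPdep [k' [j' [kI jP [-> ->]]]] -> /=.
rewrite mem_undup mem_cat.
move: jP; rewrite /Pk mem_undup => /mapP [i iS ->].
move: iS; rewrite /Sr => /mapP [x]; rewrite mem_filter => /andP [/eqP xr xS] ->.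
rewrite /key; case: ifP => ekn.
  apply/orP; right; move: ekn => /eqP ->; rewrite -xr.
  by apply: (map_f (fun x => [:: 2; nth 0 x.1 n; x.2])).
apply/orP; left; apply/flatten_mapP; exists x => //.
rewrite -xr; apply: (map_f (fun k => [:: 1; k; nth 0 x.1 k; x.2])).
by rewrite mem_filter ekn.
Qed.

End Comb.


Lemma prodn_fold (c : seq nat) : prodn c = fold_right Nat.mul 1%nat c.
Proof. by elim: c => //= a c ->. Qed.
Lemma sumn_fold (c : seq nat) : sumn c = fold_right Nat.add 0%nat c.
Proof. by elim: c => //= a c ->. Qed.

Lemma sum_INR_le (K : R) (T : Type) (f g : T -> nat) (s : seq T) :
  (0 <= K)%R -> (forall r, INR (f r) <= K * INR (g r))%R ->
  (INR (sumn [seq f r | r <- s]) <= K * INR (sumn [seq g r | r <- s]))%R.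
Proof.
move=> K0 H; elim: s => [|a s IH] /=; first by rewrite /=; lra.
rewrite !plus_INR; have := H a; lra.
Qed.

Lemma INR_le (a b : nat) : a <= b -> (INR a <= INR b)%R.
Proof. by move/leP; apply: le_INR. Qed.

Lemma combi (N n : nat) (S : seq (seq nat * nat)) :
  uniq S -> (forall x, x \in S -> size x.1 = N) -> 2 <= N -> n < N ->
  (INR (size S) <= Rpower (INR (size (undup (Xk S)))) (1 - / INR N) *
                   INR (size (undup (Ak N n S ++ Bk n S))) / INR N)%R.
Proof.
move=> uS sz N2 nN.
set x := size (undup (Xk S)).
have HN : (0 < INR N)%R by apply: lt_0_INR; apply/ltP; apply: leq_trans N2.
set K := (Rpower (INR x) (1 - / INR N) / INR N)%R.
have K0 : (0 <= K)%R.
  rewrite /K; apply: div_nonneg => //; apply: Rlt_le; apply: Rpower_pos.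
rewrite (size_part (Rs := undup [seq x.2 | x <- S])) ?undup_uniq //; last first.
  by move=> y; rewrite mem_undup.
apply: (Rle_trans _ (K * INR (sumn [seq sumn [seq size (Pk S r k) | k <- iota 0 N]
        | r <- undup [seq x.2 | x <- S]]))%R).
  apply: sum_INR_le => // r.
  have := @per_r (size (Sr S r)) x N [seq size (Pk S r k) | k <- iota 0 N].
  rewrite -prodn_fold -sumn_fold length_map length_seq => H.
  have := H (elimT leP N2) erefl (elimT leP (Sr_sizeX r uS)) (elimT leP (Sr_size r sz uS)).
  set v := INR (sumn _).
  have -> : (K * v = Rpower (INR x) (1 - / INR N) * v / INR N)%R by rewrite /K; field; lra.
  by [].
have Hs := INR_le (sum_keys S (undup_uniq [seq x.2 | x <- S]) nN).
have -> : (Rpower (INR x) (1 - / INR N) * INR (size (undup (Ak N n S ++ Bk n S))) / INR N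
   = K * INR (size (undup (Ak N n S ++ Bk n S))))%R by rewrite /K; field; lra.
by apply: Rmult_le_compat_l.
Qed.


Definition decP (Pr : Prop) : bool := if excluded_middle_informative Pr then true else false.
Lemma decPE (Pr : Prop) : decP Pr <-> Pr.
Proof. by rewrite /decP; case: excluded_middle_informative. Qed.

Lemma InE (T : eqType) (x : T) (s : seq T) : List.In x s <-> x \in s.
Proof.
elim: s => [|y s IH] //=; rewrite inE; split.
- by case=> [->|/IH ->]; rewrite ?eqxx ?orbT.
- by case/orP => [/eqP ->|/IH]; auto.
Qed.

Lemma NoDup_uniq (T : eqType) (s : seq T) : List.NoDup s -> uniq s.
Proof.
elim: s => //= x s IH /List.NoDup_cons_iff [nin nd]; rewrite IH // andbT.
by apply/negP => /InE.
Qed.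

Lemma flat_mapE (A B : Type) (f : A -> seq B) (l : seq A) :
  List.flat_map f l = flatten (map f l).
Proof. by elim: l => //= a l ->. Qed.

Lemma seqE a b : List.seq a b = iota a b.
Proof. by elim: b a => //= b IH a; rewrite IH. Qed.

Lemma idx_len ds i : List.In i (idx_tuples ds) -> size i = size ds.
Proof.
elim: ds i => [|d ds IH] i /=; first by case=> [<-|].
rewrite List.in_flat_map => -[j [_]] /List.in_map_iff [i' [<- Hi']] /=.
by rewrite (IH _ Hi').
Qed.

Lemma idx_bound ds i : List.In i (idx_tuples ds) ->
  forall k, (k < size ds)%coq_nat -> (List.nth k i 0 < List.nth k ds 0)%coq_nat.
Proof.
elim: ds i => [|d ds IH] i /=; first by move=> _ k /= Hk; lia.
rewrite List.in_flat_map => -[j [Hj]] /List.in_map_iff [i' [<- Hi']] [|k] Hk /=.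
- by move/List.in_seq: Hj; lia.
- apply: IH => //; lia.
Qed.

Lemma idx_nodup ds : List.NoDup (idx_tuples ds).
Proof.
elim: ds => [|d ds IH] /=; first by constructor; [done|constructor].
have : List.NoDup (List.seq 0 d) by apply: List.seq_NoDup.
elim: (List.seq 0 d) => [|j js IHj] /=; first by constructor.
move=> /List.NoDup_cons_iff [nin nd].
apply: List.NoDup_app.
- apply: Injective_map_NoDup => //; by move=> a b [].
- exact: IHj.
- move=> a /List.in_map_iff [x [<- _]] /List.in_flat_map [j' [Hj' /List.in_map_iff [y [[e] _]]]].
  by subst j'.
Qed.

Lemma size_flat_cons (X : seq (seq nat)) (l : seq nat) :
  length (List.flat_map (fun j => List.map (cons j) X) l) = (length l * length X)%coq_nat.
Proof. elim: l => //= j l IH; rewrite List.length_app IH List.length_map; lia. Qed.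

Lemma sizeE (T : Type) (s : seq T) : size s = length s.
Proof. by elim: s => //= x s ->. Qed.

Lemma idx_size ds : size (idx_tuples ds) = List.fold_right Nat.mul 1 ds.
Proof.
elim: ds => [|d ds IH] //=.
rewrite sizeE size_flat_cons -(sizeE (idx_tuples ds)) IH List.length_seq; lia.
Qed.


Definition gin (u : term) : seq nat :=
  match u with TX i => 0 :: i | TA k j r => [:: 1; k; j; r] | _ => [:: 3] end.
Fixpoint gout (n : nat) (u : term) : seq nat :=
  match u with
  | TAdd a b => gout n a
  | TMul (TX i :: TA _ _ r :: _) => [:: 2; nth 0 i n; r]
  | _ => [:: 3]
  end.

Lemma nthE (T : Type) (d : T) s k : nth d s k = List.nth k s d.
Proof. by elim: s k => [|x s IH] [|k] //=. Qed.

Lemma filter_ne N n : 2 <= N -> exists k rest,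
  List.filter (fun k => negb (k =? n)) (List.seq 0 N) = k :: rest.
Proof.
case: N => [|[|N]] //= _.
case: n => [|n] /=; first by eexists; eexists.
by eexists; eexists.
Qed.

Lemma gout_prod N n i r : 2 <= N -> gout n (prod_term N n i r) = [:: 2; nth 0 i n; r].
Proof.
move=> N2; rewrite /prod_term /mul_args; have [k [rest ->]] := filter_ne n N2.
by [].
Qed.

Lemma sub_inp x u : sub x u -> inp_shape u -> x = u.
Proof. by case=> //= *. Qed.

Definition good (l : term) := exists args, l = TMul args /\ forall a, List.In a args -> inp_shape a.

Lemma sum_tree_notinp t ls : sum_tree t ls -> (forall l, List.In l ls -> good l) -> ~ inp_shape t.
Proof.
case=> [t'|a b la lb _ _] H //=.
by have [args [-> _]] := H t' (or_introl erefl).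
Qed.

Lemma gout_sum n t ls K : sum_tree t ls -> (forall l, List.In l ls -> good l /\ gout n l = K) ->
  forall u, sub u t -> inp_shape u \/ gout n u = K.
Proof.
elim=> [t' | a b la lb Ha IHa Hb IHb] H u Hu.
- have [[args [Et Hargs]] Hg] := H t' (or_introl erefl).
  subst t'. inversion Hu as [|? ? ? ?|? ? ? ?|? a0 ? Ha0 Hs]; subst; first by right.
  left. have := Hargs _ Ha0. by move=> Hi; rewrite (sub_inp Hs Hi).
- have Hla : forall l, List.In l la -> good l /\ gout n l = K.
    by move=> l Hl; apply: H; apply: List.in_or_app; left.
  have Hlb : forall l, List.In l lb -> good l /\ gout n l = K.
    by move=> l Hl; apply: H; apply: List.in_or_app; right.
  inversion Hu; subst.
  + right => /=. case: (IHa Hla a (sbt_refl a)) => // Hi.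
    exfalso; apply: (sum_tree_notinp Ha) Hi => l Hl; exact: (Hla l Hl).1.
  + exact: IHa.
  + exact: IHb.
Qed.

Lemma uniq_split (L A B : seq event) (e : event) (j : nat) (pr : event -> Prop) :
  pr e ->
  (forall j' e', List.nth_error L j' = Some e' -> pr e' -> j' = j) ->
  L = (A ++ e :: B)%list ->
  (forall e', pr e' -> ~ List.In e' A) /\ (forall e', pr e' -> ~ List.In e' B).
Proof.
move=> pe Hu EL.
have Ej : length A = j.
  apply: (Hu _ e) => //; rewrite EL List.nth_error_app2; [by rewrite Nat.sub_diag | lia].
split=> e' pe' Hin.
- have [j' Hj'] := List.In_nth_error _ _ Hin.
  have Hlt : (j' < length A)%coq_nat.
    by apply/List.nth_error_Some; rewrite Hj'.
  have := Hu j' e'; rewrite EL List.nth_error_app1 // => /(_ Hj' pe'); lia.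
- have [j' Hj'] := List.In_nth_error _ _ Hin.
  have := Hu (length A + j'.+1)%coq_nat e'.
  rewrite EL List.nth_error_app2; last by lia.
  have -> : ((length A + j'.+1)%coq_nat - length A)%coq_nat = j'.+1 by lia.
  move=> /(_ Hj' pe'); lia.
Qed.

Definition recvd (q : nat) (L : seq event) : seq term :=
  List.flat_map (fun e => match e with ETransfer a b t => if b =? q then [:: t] else [::] | _ => [::] end) L.
Definition sent (q : nat) (L : seq event) : seq term :=
  List.flat_map (fun e => match e with ETransfer a b t => if a =? q then [:: t] else [::] | _ => [::] end) L.

Lemma recvd_in q L src u : List.In (ETransfer src q u) L -> List.In u (recvd q L).
Proof.
move=> H; apply/List.in_flat_map; exists (ETransfer src q u); split => //.
by rewrite Nat.eqb_refl; left.
Qed.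
Lemma sent_in q L dst u : List.In (ETransfer q dst u) L -> List.In u (sent q L).
Proof.
move=> H; apply/List.in_flat_map; exists (ETransfer q dst u); split => //.
by rewrite Nat.eqb_refl; left.
Qed.

Lemma comm_cons p e L : comm p (e :: L) =
  (nat_of_bool (match e with ETransfer a b _ => orb (a =? p) (b =? p) | _ => false end) + comm p L)%coq_nat.
Proof. rewrite /comm /=. destruct e as [a b t|p0 args|p0 a b|p0 t] => //=. by case: (orb _ _). Qed.

Lemma comm_app p A B : comm p (A ++ B)%list = (comm p A + comm p B)%coq_nat.
Proof. by rewrite /comm List.filter_app List.length_app. Qed.

Lemma recv_sent_comm q L : (forall a b t, List.In (ETransfer a b t) L -> a <> b) ->
  (length (recvd q L) + length (sent q L) <= comm q L)%coq_nat.
Proof.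
elim: L => [|e L IH] H //=.
have IH' := IH (fun a b t Hin => H a b t (or_intror Hin)).
rewrite comm_cons !List.length_app.
case: e H => [a b t|p args|p a b|p t] H /=; try lia.
have ne := H a b t (or_introl erefl).
case: (Nat.eqb_spec b q) => eb; case: (Nat.eqb_spec a q) => ea /=; try (move: IH'; rewrite -?plusE; lia).
all: move: IH'; rewrite -?plusE; lia.
Qed.


Lemma Qa_sub p0 args0 a b : p0 = TMul args0 -> sub p0 (TAdd a b) -> sub p0 a \/ sub p0 b.
Proof. move=> -> H; inversion H; subst; auto. Qed.
Lemma Qm_sub p0 args0 args : p0 = TMul args0 -> sub p0 (TMul args) ->
  args = args0 \/ exists a, List.In a args /\ sub p0 a.
Proof. move=> -> H; inversion H; subst; auto. right; eauto. Qed.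

Lemma sum_tree_leaf_sub t ls l : sum_tree t ls -> List.In l ls -> sub l t.
Proof.
elim=> [t' | a b la lb _ IHa _ IHb] Hl.
- by case: Hl => [->|[]]; constructor.
- case: (List.in_app_or _ _ _ Hl) => H; [apply: sbt_addl | apply: sbt_addr]; auto.
Qed.

Lemma prod_good N n i r : good (prod_term N n i r).
Proof.
exists (mul_args N n i r); split => // a /= [<-|/List.in_map_iff [k [<- _]]] //.
Qed.

Section Chunk.
Variables (N : nat) (dims : list nat) (R n P M : nat) (s0 : state) (es : list event) (sf : state).
Hypotheses (HN : (2 <= N)%coq_nat) (Hlen : length dims = N) (Hn : (n < N)%coq_nat).
Hypothesis Hex : mttkrp_execution N dims R n P M s0 es sf.

Lemma key_in q pre ch post sg sg' i r :
  (q < P)%coq_nat -> es = (pre ++ ch ++ post)%list ->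
  run N P M s0 pre sg -> run N P M sg ch sg' -> run N P M sg' post sf ->
  List.In i (idx_tuples dims) -> (r < R)%coq_nat ->
  List.In (EMul q (mul_args N n i r)) ch ->
  (forall a, List.In a (mul_args N n i r) -> inp_shape a -> List.In a (sg q ++ recvd q ch)%list) /\
  (exists u, List.In u (sg' q ++ sent q ch)%list /\ gout n u = [:: 2; nth 0 i n; r]).
Proof.
move: Hex => [Hb0 [Hin0 [Hrun [Huniq Hout]]]].
move=> Hq Ees Hpre Hch Hpost Hi Hr Hine.
set args0 := mul_args N n i r.
have [ch1 [ch2 Ech]] := List.in_split _ _ Hine.
rewrite Ech in Hch.
have [s1 [Hch1 Hrest]] := run_app Hch.
have [s2 [Hstep Hch2]] := run_cons_inv Hrest.
have [_ [Hargs [Es2 _]]] := step_mul_inv Hstep.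
split.
- move=> a Ha Hsh.
  have := inp_trace Hch1 Hsh (Hargs a Ha).
  case=> [H|[src H]]; apply/List.in_app_iff; [by left|right].
  apply: (recvd_in (src := src)); rewrite Ech; apply/List.in_app_iff; by left.
-
  have [j [q0 [Hj Hu]]] := Huniq i r Hi Hr.
  have Ees' : es = ((pre ++ ch1) ++ EMul q args0 :: (ch2 ++ post))%list.
    by rewrite Ees Ech -!List.app_assoc /=.
  have Hu' : forall j' e', List.nth_error es j' = Some e' -> (exists q', e' = EMul q' args0) -> j' = j.
    by move=> j' e' Hj' [q' Eq']; subst e'; apply: (Hu j' q').
  have [noA noB] := uniq_split (pr := fun e' => exists q', e' = EMul q' args0)
     (ex_intro _ q erefl) Hu' Ees'.
  have noA' : forall p', ~ List.In (EMul p' args0) (pre ++ ch1)%list.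
    by move=> p' H; apply: (noA (EMul p' args0)); [exists p'|].
  have noB2 : forall p', ~ List.In (EMul p' args0) ch2.
    by move=> p' H; apply: (noB (EMul p' args0)); [exists p'| apply/List.in_app_iff; left].
  have noBp : forall p', ~ List.In (EMul p' args0) post.
    by move=> p' H; apply: (noB (EMul p' args0)); [exists p'| apply/List.in_app_iff; right].
  have Hrun1 := run_join Hpre Hch1.
  set p := TMul args0.
  have Ph1 : forall q' u, (q' < P)%coq_nat -> List.In u (s1 q') -> ~ sub p u.
    move=> q1 u Hq1 Hu1 Hs.
    have := trace (sub p) args0 P (fun a b => @Qa_sub p args0 a b erefl)
      (fun args => @Qm_sub p args0 args erefl) Hrun1 noA' Hq1 ltac:(lia) Hu1 Hs.
    case=> [[q'' [u'' [H1 [_ [H3 H4]]]]] | [dst [u'' [H1 _]]]].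
    + have := Hin0 q'' u'' H1 H3; case=> [[i' [E _]]|[k [j' [r' [E _]]]]]; subst u'';
        inversion H4.
    + have := run_ev Hrun1 H1 => /= ; lia.
  have Hnb : (List.nth n i 0 < List.nth n dims 0)%coq_nat.
    apply: idx_bound => //; rewrite sizeE; lia.
  have [p' [t [ls [Hp' [Ht [Hst Hperm]]]]]] := Hout (List.nth n i 0) r Hnb Hr.
  have Hpls : List.In p ls.
    apply: (Permutation_in _ (Permutation_sym Hperm)).
    apply: List.in_map; apply/List.filter_In; split => //; exact: Nat.eqb_refl.
  have Hpt : sub p t := sum_tree_leaf_sub Hst Hpls.
  set Qt := fun u => sub p u /\ sub u t.
  have HQa : forall a b, Qt (TAdd a b) -> Qt a \/ Qt b.
    move=> a b [H1 H2]; case: (Qa_sub erefl H1) => H; [left|right]; split => //;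
      apply: sbt_trans H2; [apply: sbt_addl|apply: sbt_addr]; constructor.
  have HQm : forall args, Qt (TMul args) -> args = args0 \/ exists a, List.In a args /\ Qt a.
    move=> args [H1 H2]; case: (Qm_sub erefl H1) => [->|[a [Ha H]]]; [by left|right].
    exists a; split => //; split => //; apply: sbt_trans H2; apply: sbt_mul Ha _; constructor.
  have [u [Huin Hgu]] : exists u, List.In u (sg' q ++ sent q (ch1 ++ EMul q args0 :: ch2)%list)%list /\ Qt u.
    have := trace Qt args0 P HQa HQm Hpost noBp Hp' (ltac:(lia) : p' <> P) Ht (conj Hpt (sbt_refl t)).
    case=> [[q'' [u'' [H1 [_ [H3 H4]]]]] | [dst [u'' [H1 _]]]]; last first.
      by have := run_ev Hpost H1 => /=; lia.
    case: (Nat.eq_dec q'' q) => [Eq|nq].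
      by subst q''; exists u''; split => //; apply/List.in_app_iff; left.
    have := trace Qt args0 q HQa HQm Hch2 noB2 H1 nq H3 H4.
    case=> [[q3 [u3 [H5 [H6 [H7 [H8 _]]]]]] | [dst [u3 [H5 H6]]]].
      by exfalso; apply: (Ph1 q3 u3 H5 _ H8); rewrite Es2 upd_neq in H7.
    exists u3; split => //; apply/List.in_app_iff; right; apply: (sent_in (dst := dst)).
    by apply/List.in_app_iff; right; right.
  have Hleaves : forall l, List.In l ls -> good l /\ gout n l = [:: 2; nth 0 i n; r].
    move=> l Hl; have := Permutation_in _ Hperm Hl.
    move=> /List.in_map_iff [i' [<- /List.filter_In [_ Hi']]].
    split; first exact: prod_good.
    rewrite gout_prod; last by apply/leP.
    by move/Nat.eqb_eq: Hi'; rewrite !nthE => ->.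
  rewrite Ech; exists u; split => //.
  case: (gout_sum Hst Hleaves Hgu.2) => // Hsh; exfalso.
  move: (sub_inp Hgu.1 Hsh) => E; rewrite -E in Hsh; done.
Qed.

End Chunk.


Section Main.
Variables (N : nat) (dims : list nat) (RR n P M : nat) (s0 : state) (es : list event) (sf : state).
Hypotheses (HN : (2 <= N)%coq_nat) (Hlen : length dims = N) (Hn : (n < N)%coq_nat).
Hypothesis Hex : mttkrp_execution N dims RR n P M s0 es sf.

Definition T : seq (seq nat * nat) := [seq (i, r) | i <- idx_tuples dims, r <- iota 0 RR].
Definition W q (L : seq event) : nat := count (fun x => decP (List.In (EMul q (mul_args N n x.1 x.2)) L)) T.
Definition Fm : R := (Rpower (INR (3 * M)) (1 - / INR N) * INR (3 * M) / INR N)%R.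

Lemma map_In (A : Type) (U : eqType) (f : A -> U) x s : List.In x s -> f x \in map f s.
Proof. elim: s => //= y s IH [->|H]; rewrite inE ?eqxx // IH ?orbT //. Qed.

Lemma uT : uniq T.
Proof.
apply: allpairs_uniq; [exact: NoDup_uniq (idx_nodup dims) | exact: iota_uniq |].
by move=> [a b] [c d] _ _ /= [-> ->].
Qed.

Lemma memT x : x \in T -> List.In x.1 (idx_tuples dims) /\ (x.2 < RR)%coq_nat.
Proof.
case/allpairsP => [[i r] [Hi Hr ->]] /=; split; first exact/InE.
by move: Hr; rewrite mem_iota add0n => /ltP.
Qed.

Lemma Fm_ge0 : (0 <= Fm)%R.
Proof.
rewrite /Fm; apply: div_nonneg; last by apply: lt_0_INR; lia.
apply: Rmult_le_pos; [apply: Rlt_le; apply: Rpower_pos | apply: pos_INR].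
Qed.

Lemma chunk q pre ch post sg sg' :
  (q < P)%coq_nat -> es = (pre ++ ch ++ post)%list ->
  run N P M s0 pre sg -> run N P M sg ch sg' -> run N P M sg' post sf ->
  (comm q ch <= M)%coq_nat -> (INR (W q ch) <= Fm)%R.
Proof.
move=> Hq Ees Hpre Hch Hpost Hcomm.
have Hb0 := Hex.1.
set S := [seq x <- T | decP (List.In (EMul q (mul_args N n x.1 x.2)) ch)].
have -> : W q ch = size S by rewrite size_filter.
have uS : uniq S by rewrite filter_uniq // uT.
have HS : forall x, x \in S -> x \in T /\ List.In (EMul q (mul_args N n x.1 x.2)) ch.
  by move=> x; rewrite mem_filter => /andP [/decPE H1 H2].
have szS : forall x, x \in S -> size x.1 = N.
  move=> x /HS [/memT [Hi _] _]; rewrite (idx_len Hi) sizeE //.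
have N2 : 1 < N by apply/ltP.
have nN : n < N by apply/ltP.
have Hc := combi uS szS N2 nN.
have Key : forall x, x \in S ->
  (forall a, List.In a (mul_args N n x.1 x.2) -> inp_shape a -> List.In a (sg q ++ recvd q ch)%list) /\
  (exists u, List.In u (sg' q ++ sent q ch)%list /\ gout n u = [:: 2; nth 0 x.1 n; x.2]).
  move=> x /HS [/memT [Hi Hr] Hin].
  exact: (key_in HN Hlen Hn Hex Hq Ees Hpre Hch Hpost Hi Hr Hin).
set L1 := (sg q ++ recvd q ch)%list.
set L2 := (sg' q ++ sent q ch)%list.
have hX : size (undup (Xk S)) + size (undup (Ak N n S)) <= size (map gin L1).
  rewrite -size_cat; apply: uniq_leq_size.
    rewrite cat_uniq !undup_uniq andbT /=; apply/hasPn => y.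
    rewrite mem_undup => /flatten_mapP [x _ /mapP [k _ ->]].
    by rewrite mem_undup; apply/negP => /mapP [x' _].
  move=> y; rewrite mem_cat !mem_undup => /orP [/mapP [x xS ->]|].
    have Ha := (Key x xS).1 (TX x.1) (or_introl erefl) I.
    by rewrite (_ : 0 :: x.1 = gin (TX x.1)) //; apply: map_In.
  move=> /flatten_mapP [x xS /mapP [k]]; rewrite mem_filter mem_iota add0n => /andP [kn kN] ->.
  have Hk : List.In (TA k (List.nth k x.1 0) x.2) (mul_args N n x.1 x.2).
    right; apply: List.in_map; apply/List.filter_In; split.
      by apply/List.in_seq; split; [lia| move/ltP: kN].
    by case: (Nat.eqb_spec k n) => // E; rewrite E eqxx in kn.
  have Ha := (Key x xS).1 _ Hk I.
  by rewrite (_ : [:: 1; k; nth 0 x.1 k; x.2] = gin (TA k (List.nth k x.1 0) x.2)) ?nthE //; apply: map_In.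
have hB : size (undup (Bk n S)) <= size (map (gout n) L2).
  apply: uniq_leq_size; first exact: undup_uniq.
  move=> y; rewrite mem_undup => /mapP [x xS ->].
  have [u [Hu Hg]] := (Key x xS).2.
  by rewrite -Hg; apply: map_In.
have hZ : size (undup (Ak N n S ++ Bk n S)) <= size (undup (Ak N n S)) + size (undup (Bk n S)).
  rewrite -size_cat; apply: uniq_leq_size; first exact: undup_uniq.
  by move=> y; rewrite mem_undup !mem_cat !mem_undup.
have Hsg : (length (sg q) <= M)%coq_nat := run_bounded Hpre Hb0 q Hq.
have Hsg' : (length (sg' q) <= M)%coq_nat := run_bounded (run_join Hpre Hch) Hb0 q Hq.
have Hrs : (length (recvd q ch) + length (sent q ch) <= comm q ch)%coq_nat.
  apply: recv_sent_comm => a b t Ht.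
  by have := run_ev Hch Ht => /= [[_ [_]]].
set xx := size (undup (Xk S)) in Hc hX.
set zz := size (undup (Ak N n S ++ Bk n S)) in Hc hZ.
have Hxz : (xx + zz <= 3 * M)%coq_nat.
  move: hX hB hZ; rewrite !size_map /L1 /L2 !sizeE !List.length_app => hX hB hZ.
  move/leP: hX; move/leP: hB; move/leP: hZ; rewrite -!plusE -!multE. move: Hrs Hsg Hsg' Hcomm; rewrite -!plusE -?multE; lia.
case E : S => [|x0 S'].
  by apply: Fm_ge0.
rewrite -E; apply: (Rle_trans _ _ _ Hc).
have Hx1 : (1 <= xx)%coq_nat.
  apply/leP; rewrite /xx (_ : 1 = size [:: 0 :: x0.1]) //; apply: uniq_leq_size => // y.
  rewrite inE => /eqP ->; rewrite mem_undup /Xk E /=; exact: mem_head.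
have HNpos : (0 < INR N)%R by apply: lt_0_INR; lia.
rewrite /Fm /Rdiv; apply: Rmult_le_compat_r; first by apply: Rlt_le; apply: Rinv_0_lt_compat.
apply: Rmult_le_compat.
- apply: Rlt_le; apply: Rpower_pos.
- apply: pos_INR.
- apply: Rle_Rpower_l.
  + have : (/ INR N <= 1)%R.
      rewrite -Rinv_1; apply: Rinv_le_contravar; first lra.
      replace 1%R with (INR 1) by reflexivity; apply: le_INR; lia.
    lra.
  + split; first by apply: lt_0_INR; lia.
    apply: le_INR; move: Hxz; rewrite -?multE -?plusE; lia.
- apply: le_INR; move: Hxz; rewrite -?multE -?plusE; lia.
Qed.


Lemma count_le3 (X : Type) (a b c : pred X) (s : seq X) :
  (forall x, a x -> b x || c x) -> count a s <= count b s + count c s.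
Proof.
move=> H; elim: s => //= x s IH.
have Hx : (a x : nat) <= b x + c x.
  by move: (H x); case: (a x) => //= /(_ isT); case: (b x); case: (c x).
by rewrite addnACA; apply: leq_add.
Qed.

Lemma W_app q A B : W q (A ++ B)%list <= W q A + W q B.
Proof.
apply: count_le3 => x /decPE /List.in_app_iff [H|H]; apply/orP; [left|right]; exact/decPE.
Qed.

Lemma W_nil q : W q [::] = 0.
Proof.
rewrite /W; elim: T => //= x T' ->.
have -> : decP (List.In (EMul q (mul_args N n x.1 x.2)) [::]) = false.
  by apply/negP => /decPE [].
by [].
Qed.

Lemma split_budget (q b : nat) (L : seq event) : exists ch rest : seq event, L = (ch ++ rest)%list /\ (comm q ch <= b)%coq_nat /\ (rest = [::] \/ comm q ch = b).
Proof.
elim: L b => [|e L IH] b.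
  by exists [::], [::]; split => //; split; [rewrite /comm /=; lia| left].
have Hc := comm_cons q e.
case E : (match e with ETransfer a b _ => orb (a =? q) (b =? q) | _ => false end).
- case: b => [|b].
    exists [::], (e :: L); split => //; split; [rewrite /comm /=; lia| right; done].
  have [ch [rest [EL [Hb Hr]]]] := IH b.
  exists (e :: ch), rest; split; first by rewrite EL.
  rewrite Hc E /=; split; [lia| case: Hr => [->|->]; [left|right]] => //.
- have [ch [rest [EL [Hb Hr]]]] := IH b.
  exists (e :: ch), rest; split; first by rewrite EL.
  by rewrite Hc E /=.
Qed.

Lemma chunks q : (q < P)%coq_nat -> (0 < M)%coq_nat ->
  forall k post pre sg, (length post <= k)%coq_nat -> es = (pre ++ post)%list ->
  run N P M s0 pre sg -> run N P M sg post sf ->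
  (INR (W q post) <= (INR (comm q post) / INR M + 1) * Fm)%R.
Proof.
move=> Hq HM k; elim: k => [|k IH] post pre sg Hl Ees Hpre Hpost.
  case: post Hl Ees Hpost => [|e L] Hl Ees Hpost; last by move: Hl => /=; lia.
  rewrite W_nil /=; have := Fm_ge0; rewrite /comm /=; nra.
have [ch [rest [Ep [Hb Hr]]]] := split_budget q M post.
subst post.
have [sg' [Hch Hrest]] := run_app Hpost.
have Hc1 : (INR (W q ch) <= Fm)%R.
  apply: (chunk Hq (post := rest) _ Hpre Hch Hrest Hb) => //.
have HMpos : (0 < INR M)%R by apply: lt_0_INR.
have HW := W_app q ch rest.
have HW' := INR_le HW.
rewrite plus_INR in HW'.
have HF := Fm_ge0.
have HC := pos_INR (comm q ch).
have HC' := pos_INR (comm q rest).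
case: Hr => [Er|Er].
  subst rest; rewrite W_nil /= in HW'.
  rewrite comm_app /= List.app_nil_r.
  have : (0 <= INR (comm q ch) / INR M)%R by apply: div_nonneg.
  rewrite (_ : comm q [::] = 0) // Nat.add_0_r; nra.
have Hne : ch <> [::] by move=> E0; rewrite E0 /comm /= in Er; lia.
have Hlr : (length rest <= k)%coq_nat.
  have Hpos : (0 < length ch)%coq_nat by destruct ch; [done| simpl; lia].
  by move: Hl; rewrite List.length_app; lia.
have IHr := IH rest (pre ++ ch)%list sg' Hlr ltac:(by rewrite Ees List.app_assoc) (run_join Hpre Hch) Hrest.
rewrite comm_app plus_INR Er.
have -> : ((INR M + INR (comm q rest)) / INR M + 1 = 1 + (INR (comm q rest) / INR M + 1))%R.
  by field; lra.
lra.
Qed.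


Lemma sumn_add (X : Type) (f g : X -> nat) (s : seq X) :
  sumn [seq f q + g q | q <- s] = sumn [seq f q | q <- s] + sumn [seq g q | q <- s].
Proof. by elim: s => //= x s ->; rewrite addnACA. Qed.

Lemma cover (X : Type) (a : nat -> pred X) (Qs : seq nat) (s : seq X) :
  (forall x, List.In x s -> has (fun q => a q x) Qs) ->
  size s <= sumn [seq count (a q) s | q <- Qs].
Proof.
elim: s => [|x s IH] H /=; first by [].
rewrite sumn_add sumn_count.
have Hc : 0 < count (fun q => a q x) Qs by rewrite -has_count; apply: H; left.
have := IH (fun y Hy => H y (or_intror Hy)).
by rewrite -add1n; apply: leq_add.
Qed.

Lemma sumn_lt (f : nat -> nat) (Pm X : nat) (s : seq nat) : s != [::] ->
  (forall q, q \in s -> Pm * f q < X) -> Pm * sumn [seq f q | q <- s] < size s * X.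
Proof.
elim: s => [|q s IH] // _ H /=.
have Hq : Pm * f q < X by apply: H; rewrite inE eqxx.
case: s IH H => [|q' s] IH H /=; first by rewrite addn0 mul1n.
rewrite mulnDr mulSn -addSn; apply: leq_add => //.
by apply: ltnW; apply: IH => // q0 Hq0; apply: H; rewrite inE Hq0 orbT.
Qed.

Hypotheses (Hdims : forall d, List.In d dims -> (1 <= d)%coq_nat) (HR : (1 <= RR)%coq_nat).

Lemma prod_pos : (1 <= List.fold_right Nat.mul 1 dims)%coq_nat.
Proof.
elim: dims Hdims => [|d ds IH] H /=; first lia.
have := H d (or_introl erefl); have := IH (fun d' Hd => H d' (or_intror Hd)); nia.
Qed.

Lemma sizeT : size T = (List.fold_right Nat.mul 1 dims * RR)%coq_nat.
Proof. by rewrite /T size_allpairs size_iota idx_size. Qed.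

Lemma main_sec : exists p, (p < P)%coq_nat /\
    (INR (comm p es) >=
       / Rpower 3 (2 - / INR N) * (INR N * INR (List.fold_right Nat.mul 1%nat dims) * INR RR)
         / (INR P * Rpower (INR M) (1 - / INR N)) - INR M)%R.
Proof.
have [Hb0 [Hin0 [Hrun [Huniq Hout]]]] := Hex.
have Hcov : forall x, List.In x T -> has (fun q => decP (List.In (EMul q (mul_args N n x.1 x.2)) es)) (iota 0 P).
  move=> x /InE /memT [Hi Hr].
  have [j [q0 [Hj _]]] := Huniq _ _ Hi Hr.
  have Hin := List.nth_error_In _ _ Hj.
  have Hq0 : (q0 < P)%coq_nat := run_ev Hrun Hin.
  by apply/hasP; exists q0; [rewrite mem_iota add0n; apply/ltP | apply/decPE].
have HT0 : 0 < size T by rewrite sizeT; apply/ltP; have := prod_pos; nia.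
have [x0 Hx0] : exists x0, List.In x0 T.
  by move: HT0; case E : T => [|y0 T'] // _; exists y0; left.
have HP : (0 < P)%coq_nat.
  by have := Hcov x0 Hx0; case: (P) => [//|p' _]; lia.
have HM : (0 < M)%coq_nat.
  move: Hx0 => /InE /memT [Hi Hr].
  have [j [q0 [Hj _]]] := Huniq _ _ Hi Hr.
  have [A [B EA]] := List.in_split _ _ (List.nth_error_In _ _ Hj).
  rewrite EA in Hrun.
  have [m1 [_ Hr2]] := run_app Hrun.
  have [m2 [Hst _]] := run_cons_inv Hr2.
  have [Hq0 [_ [Em2 Hbd]]] := step_mul_inv Hst.
  have := Hbd q0 Hq0; rewrite Em2 upd_eq /=; lia.
have [q [Hq HqT]] : exists q, (q < P)%coq_nat /\ size T <= P * W q es.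
  case: (boolP (has (fun q => size T <= P * W q es) (iota 0 P))).
    by move=> /hasP [q]; rewrite mem_iota add0n => /ltP Hq Hle; exists q.
  move=> /hasPn H; exfalso.
  have H1 := cover Hcov.
  have H2 : P * sumn [seq W q es | q <- iota 0 P] < size (iota 0 P) * size T.
    apply: sumn_lt; first by move: HP; case: (P) => [H0|p' _]; [lia|].
    by move=> q Hq; rewrite ltnNge; apply: H.
  rewrite size_iota in H2.
  have H3 : P * size T <= P * sumn [seq W q es | q <- iota 0 P].
    by apply: leq_mul.
  by move: (leq_ltn_trans H3 H2); rewrite mulnC ltnn.
exists q; split => //.
have Hch := chunks Hq HM (k := length es) (post := es) (pre := [::]) (sg := s0) (le_n _) erefl (run_nil _ _ _ _) Hrun.
apply: (final_arith (INR (comm q es)) (INR (W q es)) (INR (size T))).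
- by apply: lt_0_INR.
- by apply: lt_0_INR.
- by apply: lt_0_INR; lia.
- by rewrite sizeT mult_INR.
- by rewrite -mult_INR; apply: INR_le.
- move: Hch; rewrite /Fm mult_INR.
  by replace (INR 3) with 3%R by (simpl; ring).
Qed.

End Main.

End Aux.

Theorem corollary1 (N : nat) (dims : list nat) (R n P M : nat)
    (HN : 2 <= N) (Hlen : length dims = N) (Hdims : forall d, In d dims -> 1 <= d)
    (HR : 1 <= R) (Hn : n < N)
    (s0 : state) (es : list event) (sf : state) :
  mttkrp_execution N dims R n P M s0 es sf ->
  exists p, p < P /\
    (INR (comm p es) >=
       / Rpower 3 (2 - / INR N) * (INR N * INR (fold_right Nat.mul 1%nat dims) * INR R)
         / (INR P * Rpower (INR M) (1 - / INR N)) - INR M)%R.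
Proof.
  intros H. exact (Aux.main_sec HN Hlen Hn H Hdims HR).
Qed.
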